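(* Let $0<\alpha'<2/9$, $0<\beta'<1/4$, $\tfrac98\alpha'\neq\beta'$. Then the separability $\mathcal{S}=\tfrac12\big(\|z_1-z_5\|_2^2+\|z_2-z_5\|_2^2\big)$ between ID nodes and the semantic OOD node equals $$\mathcal{S}=\begin{cases}(7+12\beta'+12\alpha')\Big(\frac{1-2\beta'}{3}\big(1-\beta'-\tfrac34\alpha'\big)^2+1\Big), & \tfrac98\alpha'>\beta',\\[4pt](7+12\beta'+12\alpha')\Big(\frac{2-3\alpha'}{8}\big(1-\beta'-\tfrac34\alpha'\big)^2+1\Big), & \tfrac98\alpha'<\beta'.\end{cases}$$
   Context: Toy five-node model. Nodes, in order: 1 = angel in sketch (ID, class angel), 2 = tiger in sketch (ID, class tiger), 3 = angel in painting (covariate OOD, class angel), 4 = tiger in painting (covariate OOD, class tiger), 5 = panda (semantic OOD). The model is the first-order approximation (in $\alpha'=\alpha/\rho$, $\beta'=\beta/\rho$, with $\eta_u=5,\eta_l=1$) of the augmentation graph, given concretely by $M=\begin{pmatrix}1-2\beta'-\frac32\alpha'&2\beta'&\frac{3}{\sqrt2}\alpha'&0&0\\2\beta'&1-2\beta'-\frac32\alpha'&0&\frac3{\sqrt2}\alpha'&0\\\frac3{\sqrt2}\alpha'&0&1-2\beta'-3\alpha'&2\beta'&0\\0&\frac3{\sqrt2}\alpha'&2\beta'&1-2\beta'-3\alpha'&0\\0&0&0&0&1\end{pmatrix}$, $C=7+12\beta'+12\alpha'$, and $\Delta=\sqrt{C}\,\mathrm{diag}\big(\tfrac{1}{\sqrt2}(1-\beta'-\tfrac34\alpha'),\tfrac1{\sqrt2}(1-\beta'-\tfrac34\alpha'),1-\beta'-\tfrac32\alpha',1-\beta'-\tfrac32\alpha',1\big)$.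 Embeddings: let $V\in\mathbb{R}^{5\times3}$ have orthonormal columns spanning eigenvectors of $M$ for its three largest eigenvalues (with multiplicity), $\Sigma$ the diagonal matrix of those eigenvalues, and $Z=\Delta V\Sigma^{1/2}$ with $i$-th row $z_i^\top$ the embedding of node $i$. (Distances between rows do not depend on the choice of orthonormal basis within eigenspaces.) *)

(* Defs.v *)
From HB Require Import structures.
From mathcomp Require Import all_boot all_order all_algebra.
Set Implicit Arguments. Unset Strict Implicit. Unset Printing Implicit Defensive.
Import Order.TTheory GRing.Theory Num.Theory.
Local Open Scope ring_scope.

Section Toy.
Variable R : rcfType.

(* Nodes 1..5 of the paper are indices 0..4 here.  a = alpha', b = beta'. *)
Definition Mentry (a b : R) (i j : nat) : R :=
  let s := 3 / Num.sqrt 2 * a in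
  match i, j with
  | 0, 0 | 1, 1 => 1 - 2 * b - 3 / 2 * a
  | 2, 2 | 3, 3 => 1 - 2 * b - 3 * a
  | 0, 1 | 1, 0 | 2, 3 | 3, 2 => 2 * b
  | 0, 2 | 2, 0 | 1, 3 | 3, 1 => s
  | 4, 4 => 1
  | _, _ => 0
  end.

Definition Mtoy (a b : R) : 'M[R]_5 := \matrix_(i < 5, j < 5) Mentry a b i j.

Definition Ctoy (a b : R) : R := 7 + 12 * b + 12 * a.

Definition Dentry (a b : R) (i : nat) : R :=
  match i with
  | 0 | 1 => (1 - b - 3 / 4 * a) / Num.sqrt 2
  | 2 | 3 => 1 - b - 3 / 2 * a
  | _ => 1
  end.

Definition Delta (a b : R) : 'M[R]_5 :=
  Num.sqrt (Ctoy a b) *: diag_mx (\row_(i < 5) Dentry a b i).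

Lemma le35 : (3 <= 5)%N. Proof. by []. Qed.

(* V (5x3, orthonormal columns) spans eigenvectors of M for its three largest
   eigenvalues (with multiplicity), lam being those eigenvalues (diagonal of
   Sigma): V consists of the first three columns of an orthogonal
   eigenbasis U of M whose eigenvalues d are sorted in nonincreasing order. *)
Definition top3_eig (M : 'M[R]_5) (V : 'M[R]_(5, 3)) (lam : 'rV[R]_3) : Prop :=
  exists (U : 'M[R]_5) (d : 'rV[R]_5),
    [/\ U^T *m U = 1%:M,
        M = U *m diag_mx d *m U^T,
        (forall i j : 'I_5, (i <= j)%N -> d 0 j <= d 0 i),
        V = \matrix_(i < 5, k < 3) U i (widen_ord le35 k) &
        lam = \row_(k < 3) d 0 (widen_ord le35 k)].

(* Z = Delta V Sigma^{1/2}; row i is the embedding z_i. *)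
Definition Zemb (a b : R) (V : 'M[R]_(5, 3)) (lam : 'rV[R]_3) : 'M[R]_(5, 3) :=
  Delta a b *m V *m diag_mx (map_mx Num.sqrt lam).

Definition sqdist (Z : 'M[R]_(5, 3)) (i j : 'I_5) : R :=
  \sum_(k < 3) (Z i k - Z j k) ^+ 2.

Definition separability (a b : R) (V : 'M[R]_(5, 3)) (lam : 'rV[R]_3) : R :=
  let Z := Zemb a b V lam in
  (sqdist Z 0 4 + sqdist Z 1 4) / 2.

End Toy.

(* Main.v *)
Require Import Defs.
From HB Require Import structures.
From mathcomp Require Import all_boot all_order all_algebra.
From mathcomp Require Import ring lra.
Import Order.TTheory GRing.Theory Num.Theory.
Local Open Scope ring_scope.

Definition o0 : 'I_5 := @Ordinal 5 0 isT.
Definition o1 : 'I_5 := @Ordinal 5 1 isT.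
Definition o2 : 'I_5 := @Ordinal 5 2 isT.
Definition o3 : 'I_5 := @Ordinal 5 3 isT.
Definition o4 : 'I_5 := @Ordinal 5 4 isT.

Lemma sum5 (R : nmodType) (F : 'I_5 -> R) :
  \sum_(i < 5) F i = F o0 + F o1 + F o2 + F o3 + F o4.
Proof.
rewrite !big_ord_recr big_ord0 /= add0r.
by congr (_ + _ + _ + _ + _); congr F; apply/val_inj.
Qed.

Lemma ord5_cases (P : 'I_5 -> Prop) :
  P o0 -> P o1 -> P o2 -> P o3 -> P o4 -> forall i, P i.
Proof.
move=> H0 H1 H2 H3 H4 [[|[|[|[|[|i]]]]] Hi] //.
- by have -> : Ordinal Hi = o0 by apply/val_inj.
- by have -> : Ordinal Hi = o1 by apply/val_inj.
- by have -> : Ordinal Hi = o2 by apply/val_inj.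
- by have -> : Ordinal Hi = o3 by apply/val_inj.
- by have -> : Ordinal Hi = o4 by apply/val_inj.
Qed.

Lemma arith3 (R : realDomainType) (d0 d4 f0 f1 e2 e3 e4 x y z : R) :
  d0 = 1 -> d4 = e4 -> f0 = 1 -> f1 = 1 ->
  e2 < 1 -> e3 < e2 -> e4 < e3 -> x <= d0 -> y <= x -> z <= y -> d4 <= z ->
  d0 + x + y + z + d4 = f0 + f1 + e2 + e3 + e4 ->
  [\/ x = e2, y = e2 | z = e2] -> [\/ x = e3, y = e3 | z = e3] ->
  [/\ x = 1, y = e2 & z = e3].
Proof.
move=> -> -> -> -> h1 h2 h3 h4 h5 h6 h7 h8 [] H1 [] H; try (exfalso; lra); split; lra.
Qed.

Arguments arith3 {R d0 d4 f0 f1 e2 e3 e4 x y z}.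
Section Key.
Variable R : rcfType.

Lemma key (W U : 'M[R]_5) (E d : 'rV[R]_5) :
  W^T *m W = 1%:M -> U^T *m U = 1%:M ->
  W *m diag_mx E *m W^T = U *m diag_mx d *m U^T ->
  E 0 o0 = 1 -> E 0 o1 = 1 -> E 0 o2 < 1 -> E 0 o3 < E 0 o2 -> E 0 o4 < E 0 o3 ->
  (forall i j : 'I_5, (i <= j)%N -> d 0 j <= d 0 i) ->
  (forall j, d 0 j = E 0 j) /\
  (forall (i : 'I_5) (p q : R),
     d 0 o0 * (p * U i o0 + q * U o4 o0) ^+ 2
   + d 0 o1 * (p * U i o1 + q * U o4 o1) ^+ 2
   + d 0 o2 * (p * U i o2 + q * U o4 o2) ^+ 2
   = (p * W i o0 + q * W o4 o0) ^+ 2 + (p * W i o1 + q * W o4 o1) ^+ 2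
     + E 0 o2 * (p * W i o2 + q * W o4 o2) ^+ 2).
Proof.
move=> WtW UtU Hm E0 E1 E2 E3 E4 Hs.
have WWt : W *m W^T = 1%:M by apply: mulmx1C.
have UUt : U *m U^T = 1%:M by apply: mulmx1C.
set Q := W^T *m U.
have QQt : Q *m Q^T = 1%:M.
  by rewrite /Q trmx_mul trmxK !mulmxA -[W^T *m U *m U^T]mulmxA UUt mulmx1.
have QtQ : Q^T *m Q = 1%:M.
  by rewrite /Q trmx_mul trmxK !mulmxA -[U^T *m W *m W^T]mulmxA WWt mulmx1.
have EQ : diag_mx E *m Q = Q *m diag_mx d.
  transitivity (W^T *m (W *m diag_mx E *m W^T) *m U).
    by rewrite /Q !mulmxA WtW mul1mx.
  rewrite Hm /Q !mulmxA -[W^T *m U *m diag_mx d *m U^T *m U]mulmxA UtU mulmx1.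
  done.
have UWQ : U = W *m Q by rewrite /Q mulmxA WWt mul1mx.
clearbody Q.
have Erel i j : E 0 i * Q i j = d 0 j * Q i j.
  have := congr1 (fun M : 'M[R]_5 => M i j) EQ; rewrite mul_diag_mx mul_mx_diag !mxE.
  by move=> ->; rewrite mulrC.
have rowE i : exists j, d 0 j = E 0 i.
  have [j Hj|H0] := pickP (fun j => Q i j != 0).
    by exists j; apply: (mulIf Hj); rewrite Erel.
  have := congr1 (fun M : 'M[R]_5 => M i i) QQt; rewrite !mxE eqxx big1 //.
    by move/eqP; rewrite eq_sym oner_eq0.
  by move=> j _; rewrite mxE; move/negbFE/eqP: (H0 j) => ->; rewrite mul0r.
have colE j : exists i, d 0 j = E 0 i.
  have [i Hi|H0] := pickP (fun i => Q i j != 0).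
    by exists i; apply: (mulIf Hi); rewrite Erel.
  have := congr1 (fun M : 'M[R]_5 => M j j) QtQ; rewrite !mxE eqxx big1 //.
    by move/eqP; rewrite eq_sym oner_eq0.
  by move=> i _; rewrite mxE; move/negbFE/eqP: (H0 i) => ->; rewrite mul0r.
have tr : \sum_(j < 5) d 0 j = \sum_(j < 5) E 0 j.
  rewrite -!mxtrace_diag.
  have -> : \tr (diag_mx d) = \tr (U *m diag_mx d *m U^T).
    by rewrite mxtrace_mulC mulmxA UtU mul1mx.
  rewrite -Hm.
  by rewrite mxtrace_mulC mulmxA WtW mul1mx.
rewrite !sum5 in tr.
have s10 := Hs o0 o1 isT. have s21 := Hs o1 o2 isT.
have s32 := Hs o2 o3 isT. have s43 := Hs o3 o4 isT.
have d0 : d 0 o0 = 1.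
  have [j Hj] := rowE o0. have [i Hi] := colE o0.
  have : d 0 j <= d 0 o0 by apply: Hs.
  move: i Hi; apply: ord5_cases => Hi; lra.
have d4 : d 0 o4 = E 0 o4.
  have [j Hj] := rowE o4. have [i Hi] := colE o4.
  have : d 0 o4 <= d 0 j by apply: Hs; case: j {Hj} => [j /= Hj]; rewrite -ltnS.
  move: i Hi; apply: ord5_cases => Hi; lra.
have [d1 d2 d3] : [/\ d 0 o1 = 1, d 0 o2 = E 0 o2 & d 0 o3 = E 0 o3].
  have [j2 Hj2] := rowE o2. have [j3 Hj3] := rowE o3.
  apply: (arith3 d0 d4 E0 E1 E2 E3 E4 s10 s21 s32 s43 tr).
  - move: j2 Hj2; apply: ord5_cases => H;
      [exfalso; move: E2; rewrite -H d0 ltxx // | by apply: Or31 | by apply: Or32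
      | by apply: Or33 | exfalso; move: (lt_trans E4 E3); rewrite -H d4 ltxx //].
  - move: j3 Hj3; apply: ord5_cases => H;
      [exfalso; move: (lt_trans E3 E2); rewrite -H d0 ltxx // | by apply: Or31 | by apply: Or32
      | by apply: Or33 | exfalso; move: E4; rewrite -H d4 ltxx //].
have dE : forall j, d 0 j = E 0 j.
  by apply: ord5_cases => //; rewrite ?d0 ?d1 ?E0 ?E1.
split=> //.
have Qz m k : E 0 m != E 0 k -> Q m k = 0.
  move=> Hne; have := Erel m k; rewrite dE => /eqP; rewrite -subr_eq0 -mulrBl.
  by rewrite mulf_eq0 subr_eq0 (negbTE Hne) /= => /eqP.
have ne : forall x y : R, x < y -> (x != y) * (y != x).
  by move=> x y H; rewrite lt_eqF // gt_eqF.
have q02 : Q o0 o2 = 0 by apply: Qz; rewrite E0 (ne _ _ E2).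
have q03 : Q o0 o3 = 0 by apply: Qz; rewrite E0 (ne _ _ (lt_trans E3 E2)).
have q04 : Q o0 o4 = 0 by apply: Qz; rewrite E0 (ne _ _ (lt_trans E4 (lt_trans E3 E2))).
have q12 : Q o1 o2 = 0 by apply: Qz; rewrite E1 (ne _ _ E2).
have q13 : Q o1 o3 = 0 by apply: Qz; rewrite E1 (ne _ _ (lt_trans E3 E2)).
have q14 : Q o1 o4 = 0 by apply: Qz; rewrite E1 (ne _ _ (lt_trans E4 (lt_trans E3 E2))).
have q20 : Q o2 o0 = 0 by apply: Qz; rewrite E0 (ne _ _ E2).
have q21 : Q o2 o1 = 0 by apply: Qz; rewrite E1 (ne _ _ E2).
have q23 : Q o2 o3 = 0 by apply: Qz; rewrite (ne _ _ E3).
have q24 : Q o2 o4 = 0 by apply: Qz; rewrite (ne _ _ (lt_trans E4 E3)).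
have q30 : Q o3 o0 = 0 by apply: Qz; rewrite E0 (ne _ _ (lt_trans E3 E2)).
have q31 : Q o3 o1 = 0 by apply: Qz; rewrite E1 (ne _ _ (lt_trans E3 E2)).
have q32 : Q o3 o2 = 0 by apply: Qz; rewrite (ne _ _ E3).
have q40 : Q o4 o0 = 0 by apply: Qz; rewrite E0 (ne _ _ (lt_trans E4 (lt_trans E3 E2))).
have q41 : Q o4 o1 = 0 by apply: Qz; rewrite E1 (ne _ _ (lt_trans E4 (lt_trans E3 E2))).
have q42 : Q o4 o2 = 0 by apply: Qz; rewrite (ne _ _ (lt_trans E4 E3)).
have Ue i k : U i k = \sum_(m < 5) W i m * Q m k by rewrite {1}UWQ mxE.
have r00 : Q o0 o0 * Q o0 o0 + Q o0 o1 * Q o0 o1 = 1.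
  have := congr1 (fun M : 'M[R]_5 => M o0 o0) QQt; rewrite !mxE sum5 !mxE q02 q03 q04.
  by rewrite ?mulr0 ?mul0r ?addr0 ?add0r => ->.
have r01 : Q o0 o0 * Q o1 o0 + Q o0 o1 * Q o1 o1 = 0.
  have := congr1 (fun M : 'M[R]_5 => M o0 o1) QQt; rewrite !mxE sum5 !mxE q02 q03 q04.
  by rewrite ?mulr0 ?mul0r ?addr0 ?add0r => ->.
have r11 : Q o1 o0 * Q o1 o0 + Q o1 o1 * Q o1 o1 = 1.
  have := congr1 (fun M : 'M[R]_5 => M o1 o1) QQt; rewrite !mxE sum5 !mxE q12 q13 q14.
  by rewrite ?mulr0 ?mul0r ?addr0 ?add0r => ->.
have r22 : Q o2 o2 * Q o2 o2 = 1.
  have := congr1 (fun M : 'M[R]_5 => M o2 o2) QQt; rewrite !mxE sum5 !mxE q20 q21 q23 q24.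
  by rewrite ?mulr0 ?mul0r ?addr0 ?add0r => ->.
move=> i p q.
rewrite !Ue !sum5 q20 q30 q40 q21 q31 q41 q02 q12 q32 q42 d0 d1 d2.
rewrite !mulr0 !addr0.
set c0 := p * W i o0 + q * W o4 o0.
set c1 := p * W i o1 + q * W o4 o1.
set c2 := p * W i o2 + q * W o4 o2.
transitivity (c0^+2 * (Q o0 o0 * Q o0 o0 + Q o0 o1 * Q o0 o1)
  + 2 * c0 * c1 * (Q o0 o0 * Q o1 o0 + Q o0 o1 * Q o1 o1)
  + c1^+2 * (Q o1 o0 * Q o1 o0 + Q o1 o1 * Q o1 o1)
  + E 0 o2 * c2 ^+2 * (Q o2 o2 * Q o2 o2)).
  rewrite /c0 /c1 /c2; ring.
by rewrite r00 r01 r11 r22; ring.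
Qed.
End Key.

Ltac fl h2 h3 := field: h2 h3.
Ltac fl3 h2 h3 h4 := field: h2 h3 h4.
Section Conc.
Variable R : rcfType.
Variables a b : R.
Definition s2 : R := Num.sqrt 2.
Definition s3 : R := Num.sqrt 3.

Definition Wb (i j : nat) : R :=
  match j, i with
  | 0, 4 => 1
  | 1, 0 | 1, 1 => 1 / s3
  | 1, 2 | 1, 3 => 1 / (s3 * s2)
  | 2, 0 => 1 / s3 | 2, 1 => - (1 / s3)
  | 2, 2 => 1 / (s3 * s2) | 2, 3 => - (1 / (s3 * s2))
  | 3, 0 | 3, 1 => 1 / (s3 * s2)
  | 3, 2 | 3, 3 => - (1 / s3)
  | 4, 0 => 1 / (s3 * s2) | 4, 1 => - (1 / (s3 * s2))
  | 4, 2 => - (1 / s3) | 4, 3 => 1 / s3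
  | _, _ => 0
  end.
Definition Eb (j : nat) : R :=
  match j with
  | 0 | 1 => 1 | 2 => 1 - 4 * b | 3 => 1 - 9 / 2 * a | _ => 1 - 4 * b - 9 / 2 * a
  end.
Definition pm (sw : bool) (j : nat) : nat :=
  if sw then match j with 2 => 3 | 3 => 2 | _ => j end else j.
Definition Wm (sw : bool) : 'M[R]_5 := \matrix_(i < 5, j < 5) Wb i (pm sw j).
Definition Er (sw : bool) : 'rV[R]_5 := \row_(j < 5) Eb (pm sw j).

Lemma s2sq : s2 ^+ 2 = 2. Proof. by rewrite sqr_sqrtr // ler0n. Qed.
Lemma s3sq : s3 ^+ 2 = 3. Proof. by rewrite sqr_sqrtr // ler0n. Qed.
Lemma s2n0 : s2 != 0. Proof. by rewrite gt_eqF // sqrtr_gt0 ltr0n. Qed.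
Lemma s3n0 : s3 != 0. Proof. by rewrite gt_eqF // sqrtr_gt0 ltr0n. Qed.

Lemma Worth sw : (Wm sw)^T *m Wm sw = 1%:M.
Proof.
have h2 := s2sq; have h3 := s3sq; have n2 := s2n0; have n3 := s3n0.
apply/matrixP; apply: ord5_cases; apply: ord5_cases;
  rewrite !mxE sum5 !mxE /=; case: sw => /=; fl h2 h3; rewrite ?n2 ?n3 //.
Qed.

Lemma Weig sw : Mtoy a b = Wm sw *m diag_mx (Er sw) *m (Wm sw)^T.
Proof.
have h2 := s2sq; have h3 := s3sq; have n2 := s2n0; have n3 := s3n0.
rewrite mul_mx_diag.
apply/matrixP; apply: ord5_cases; apply: ord5_cases;
  rewrite !mxE sum5 !mxE /Mentry /=; rewrite -/s2; case: sw => /=; fl h2 h3; rewrite ?n2 ?n3 //.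
Qed.

Definition p0 : 'I_3 := @Ordinal 3 0 isT.
Definition p1 : 'I_3 := @Ordinal 3 1 isT.
Definition p2 : 'I_3 := @Ordinal 3 2 isT.
Lemma wo0 : widen_ord le35 p0 = o0. Proof. exact: val_inj. Qed.
Lemma wo1 : widen_ord le35 p1 = o1. Proof. exact: val_inj. Qed.
Lemma wo2 : widen_ord le35 p2 = o2. Proof. exact: val_inj. Qed.
Lemma sum3 (F : 'I_3 -> R) : \sum_(k < 3) F k = F p0 + F p1 + F p2.
Proof.
rewrite !big_ord_recr big_ord0 /= add0r.
by congr (_ + _ + _); congr F; apply/val_inj.
Qed.

Lemma Zent V lam i k : Zemb a b V lam i k =
  Num.sqrt (Ctoy a b) * Dentry a b i * V i k * Num.sqrt (lam 0 k).
Proof.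
rewrite /Zemb mul_mx_diag mxE /Delta -scalemxAl mul_diag_mx !mxE.
by rewrite !mulrA.
Qed.

Lemma reshape (c D D' u v dd : R) : 0 <= dd ->
  (c * D * u * Num.sqrt dd - c * D' * v * Num.sqrt dd) ^+ 2
  = dd * (c * D * u + (- (c * D')) * v) ^+ 2.
Proof. move=> h; rewrite -[in RHS](sqr_sqrtr h); ring. Qed.

Lemma Eprops (sw : bool) : 0 < a -> a < 2 / 9 -> 0 < b -> b < 1 / 4 ->
  (if sw then 9 / 8 * a < b else b < 9 / 8 * a) ->
  [/\ Er sw 0 o0 = 1, Er sw 0 o1 = 1, Er sw 0 o2 < 1, Er sw 0 o3 < Er sw 0 o2
    & Er sw 0 o4 < Er sw 0 o3 /\ 0 < Er sw 0 o2].
Proof.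
move=> h1 h2 h3 h4; rewrite !mxE; case: sw => /= h; split; try split; lra.
Qed.
Lemma sepE V lam : separability a b V lam =
  (sqdist (Zemb a b V lam) o0 o4 + sqdist (Zemb a b V lam) o1 o4) / 2.
Proof. by rewrite /separability /=; congr ((sqdist _ _ _ + sqdist _ _ _) / 2); apply/val_inj. Qed.
End Conc.

Theorem theorem3 (R : rcfType) (a b : R) :
  0 < a -> a < 2 / 9 -> 0 < b -> b < 1 / 4 -> 9 / 8 * a != b ->
  (exists (V : 'M[R]_(5, 3)) (lam : 'rV[R]_3), top3_eig (Mtoy a b) V lam) /\
  (forall (V : 'M[R]_(5, 3)) (lam : 'rV[R]_3), top3_eig (Mtoy a b) V lam ->
     (b < 9 / 8 * a ->
        separability a b V lam =
        Ctoy a b * ((1 - 2 * b) / 3 * (1 - b - 3 / 4 * a) ^+ 2 + 1)) /\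
     (9 / 8 * a < b ->
        separability a b V lam =
        Ctoy a b * ((2 - 3 * a) / 8 * (1 - b - 3 / 4 * a) ^+ 2 + 1))).
Proof.
move=> ha0 ha1 hb0 hb1 hne.
set sw := 9 / 8 * a < b.
have hsw : if sw then 9 / 8 * a < b else b < 9 / 8 * a.
  rewrite /sw; case: ltP => //= h; rewrite lt_neqAle h andbT eq_sym //.
have [E0 E1 E2 E3 [E4 E2p]] := @Eprops R a b sw ha0 ha1 hb0 hb1 hsw.
split.
  exists (\matrix_(i < 5, k < 3) Wm R sw i (widen_ord le35 k)).
  exists (\row_(k < 3) Er R a b sw 0 (widen_ord le35 k)).
  exists (Wm R sw), (Er R a b sw); split => //.
  - exact: (Worth R sw).
  - exact: (Weig R a b sw).
  - apply: ord5_cases; apply: ord5_cases => //= _; lra.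
move=> V lam [U [d [UtU HM Hs -> ->]]].
have [dE Hid] := @key R _ _ _ _ (Worth R sw) UtU (etrans (esym (Weig R a b sw)) HM)
  E0 E1 E2 E3 E4 Hs.
have dnn (k : 'I_5) : (k <= 2)%N -> 0 <= d 0 k.
  rewrite dE; move: k; apply: ord5_cases => //= _; lra.
rewrite !sepE /sqdist !sum3 !Zent !mxE !wo0 !wo1 !wo2 !reshape ?dnn //.
rewrite !Hid.

rewrite !mxE /= /s2 /s3.
have h2 : Num.sqrt (2 : R) ^+ 2 = 2 by exact: s2sq.
have h3 : Num.sqrt (3 : R) ^+ 2 = 3 by exact: s3sq.
have n2 : Num.sqrt (2 : R) != 0 by exact: s2n0.
have n3 : Num.sqrt (3 : R) != 0 by exact: s3n0.
have hC : Num.sqrt (Ctoy a b) ^+ 2 = Ctoy a b by rewrite sqr_sqrtr // /Ctoy; lra.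
clearbody sw; case: sw hsw {E0 E1 E2 E3 E4 E2p Hid dE dnn} => /= hsw; rewrite /s2 /s3;
  split => h; try (exfalso; lra); fl3 h2 h3 hC; rewrite ?n2 ?n3 //.
Qed.
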